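(* Let $q\ge2$ and let $(w_{n_k})_{k\ge1}$ be a $q$-lacunary sequence of Walsh functions. Then for every $M\ge1$ and all real numbers $a_1,\dots,a_M$, the functions $R_M=\sum_{k=1}^Ma_kr_k$ and $W_M=\sum_{k=1}^Ma_kw_{n_k}$ have the same distribution function on $[0,1]$ (i.e. $m(\{|R_M|>\lambda\})=m(\{|W_M|>\lambda\})$ for all $\lambda>0$).
   Context: $m$ is Lebesgue measure on $[0,1]$. Rademacher functions $r_k(t)=\mathrm{sign}\sin(2^k\pi t)$, $k\ge1$. Walsh functions (Paley numbering): $w_0=1$ and for $k=a_12^0+\dots+a_n2^{n-1}$ with $a_i\in\{0,1\}$, $w_k=r_1^{a_1}\cdots r_n^{a_n}$. A sequence $(w_{n_k})$ is $q$-lacunary if $n_{k+1}/n_k\ge q$ for all $k\ge1$. *)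

(* Defs.v *)
From HB Require Import structures.
From mathcomp Require Import all_boot all_order all_algebra.
From mathcomp Require Import all_classical all_reals all_analysis.
Set Implicit Arguments. Unset Strict Implicit. Unset Printing Implicit Defensive.
Import Order.TTheory GRing.Theory Num.Theory.
Local Open Scope ring_scope.

Definition rademacher {R : realType} (k : nat) (t : R) : R :=
  Num.sg (sin (2%:R ^+ k * pi * t)).

(* Walsh function (Paley numbering): for n = sum_i a_i 2^(i-1) (i >= 1),
   w_n = prod_i r_i^{a_i}.  The binary digit of weight 2^i is odd (n %/ 2^i),
   and it multiplies r_(i+1).  Indices i >= n contribute digit 0, so the
   product over i < n covers all digits; w_0 = 1 (empty product). *)
Definition walsh {R : realType} (n : nat) (t : R) : R :=
  \prod_(i < n | odd (n %/ 2 ^ i)) rademacher i.+1 t.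

(* q-lacunary sequence of indices (n_k)_{k>=1}: n_{k+1}/n_k >= q for k >= 1.
   (the indices are required positive so that the ratio makes sense) *)
Definition lacunary {R : realType} (q : R) (n : nat -> nat) : Prop :=
  (forall k, (1 <= k)%N -> (0 < n k)%N) /\
  (forall k, (1 <= k)%N -> q <= (n k.+1)%:R / (n k)%:R).

(* Main.v *)
Require Import Defs.
From HB Require Import structures.
From mathcomp Require Import all_boot all_order all_algebra.
From mathcomp Require Import all_classical all_reals all_analysis.
From mathcomp Require Import ring lra zify.
Import Order.TTheory GRing.Theory Num.Theory.
Local Open Scope classical_set_scope.
Local Open Scope ring_scope.
Set Implicit Arguments. Unset Strict Implicit.

Section Comb.
Variables (N M : nat).

Lemma fiber_count (L : {ffun 'I_N -> bool} -> {ffun 'I_M -> bool})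
  (Ladd : forall f f', L (f + f') = L f + L f')
  (Lsurj : forall g, exists f, L f = g) (P : pred {ffun 'I_M -> bool}) :
  #|[pred f | P (L f)]| = (#|[pred f | L f == 0%R]| * #|P|)%N.
Proof.
rewrite -sum1_card (eq_bigl (fun f => P (L f))); last by move=> f; rewrite inE.
rewrite (partition_big L P) /=; last by [].
rewrite -sum1_card mulnC -sum_nat_const.
apply: eq_bigr => g Pg.
rewrite (eq_bigl (fun f => L f == g)); last first.
  by move=> f /=; case: (boolP (L f == g)) => [/eqP ->|]; rewrite ?Pg ?andbF ?andbT.
have [x0 Lx0] := Lsurj g.
rewrite (reindex_inj (addIr x0)) /=.
apply: eq_bigl => f /=.
by rewrite Ladd Lx0 -{2}[g]add0r (inj_eq (addIr g)) inE.
Qed.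

Lemma count_eq (L1 L2 : {ffun 'I_N -> bool} -> {ffun 'I_M -> bool})
  (L1add : forall f f', L1 (f + f') = L1 f + L1 f')
  (L1surj : forall g, exists f, L1 f = g)
  (L2add : forall f f', L2 (f + f') = L2 f + L2 f')
  (L2surj : forall g, exists f, L2 f = g) (P : pred {ffun 'I_M -> bool}) :
  #|[pred f | P (L1 f)]| = #|[pred f | P (L2 f)]|.
Proof.
rewrite (fiber_count L1add L1surj) (fiber_count L2add L2surj).
have := fiber_count L1add L1surj predT.
have := fiber_count L2add L2surj predT.
have -> : #|[pred f | predT (L1 f)]| = #|[pred f | predT (L2 f)]|.
  by apply: eq_card.
move=> ->; move/eqP; rewrite eqn_pmul2r; first by move/eqP->.
by rewrite (eq_card (B := {ffun 'I_M -> bool})) // card_ffun card_bool expn_gt0.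
Qed.

Lemma tri_surj (h : 'I_M -> 'I_N) (hinj : injective h)
  (Z : 'I_M -> {ffun 'I_N -> bool} -> bool)
  (Zloc : forall k (f f' : {ffun 'I_N -> bool}), (forall i : 'I_N, (i < h k)%N -> f i = f' i) -> Z k f = Z k f') :
  forall g : {ffun 'I_M -> bool}, exists f : {ffun 'I_N -> bool}, [ffun k => f (h k) + Z k f] = g.
Proof.
pose T (f : {ffun 'I_N -> bool}) : {ffun 'I_N -> bool} :=
  [ffun i => f i + \sum_(k | h k == i) Z k f].
have Tinj : injective T.
  move=> f f' Tff'; apply/ffunP.
  suff H : forall m (i : 'I_N), (i < m)%N -> f i = f' i by move=> i; apply: (H i.+1).
  elim=> [//|m IH] i; rewrite ltnS leq_eqVlt => /orP[/eqP ei|]; last exact: IH.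
  have := congr1 (fun F : {ffun 'I_N -> bool} => F i) Tff'; rewrite !ffunE.
  rewrite (eq_bigr (fun k => Z k f')); first by move/addIr.
  move=> k /eqP hk; apply: Zloc => i' hi'; apply: IH; by rewrite -ei -hk.
have Tbij : bijective T by apply: inj_card_bij.
case: Tbij => Tinv TK KT.
move=> g; exists (Tinv [ffun i => \sum_(k | h k == i) g k]).
set f := Tinv _.
apply/ffunP => k; rewrite ffunE.
have := congr1 (fun F : {ffun 'I_N -> bool} => F (h k)) (KT [ffun i => \sum_(k | h k == i) g k]).
rewrite -/f !ffunE.
have E : forall (F : 'I_M -> bool), \sum_(k' | h k' == h k) F k' = F k.
  move=> F; rewrite (eq_bigl (pred1 k)); first by rewrite big_pred1_eq.
  by move=> k'; rewrite /= (inj_eq hinj).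
by rewrite !E.
Qed.

End Comb.

Lemma sg_sign (R : realType) (b : bool) : Num.sg ((-1) ^+ b : R) = (-1) ^+ b.
Proof. by case: b; rewrite ?expr1 ?expr0 ?sgrN1 ?sgr1. Qed.

Lemma rad_dyadic (R : realType) (N j k : nat) (t : R) : (1 <= k <= N)%N ->
  j%:R / 2 ^+ N < t < j.+1%:R / 2 ^+ N ->
  rademacher k t = (-1) ^+ odd (j %/ 2 ^ (N - k)).
Proof.
move=> /andP[k1 kN] /andP[jt tj].
have p2N : (0 : R) < 2 ^+ N by apply: exprn_gt0.
have jt' : j%:R < t * 2 ^+ N by rewrite -ltr_pdivrMr.
have tj' : t * 2 ^+ N < j.+1%:R by rewrite -ltr_pdivlMr.
set e := (N - k)%N; set m := (j %/ 2 ^ e)%N.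
have NE : N = (k + e)%N by rewrite /e subnKC.
have p2e : (0 : R) < 2 ^+ e by apply: exprn_gt0.
have h1 : (m * 2 ^ e <= j)%N by rewrite leq_divM.
have h2 : (j.+1 <= m.+1 * 2 ^ e)%N.
  by rewrite /m; apply: ltn_ceil; rewrite expn_gt0.
have h1' : m%:R * 2 ^+ e <= j%:R :> R by rewrite -natrX -natrM ler_nat.
have h2' : j.+1%:R <= m.+1%:R * 2 ^+ e :> R by rewrite -natrX -natrM ler_nat.
set x := 2 ^+ k * t.
have xe : x * 2 ^+ e = t * 2 ^+ N by rewrite /x NE exprD; ring.
have xm : m%:R < x.
  by rewrite -(ltr_pM2r p2e) xe; apply: le_lt_trans h1' jt'.
have xm1 : x < m.+1%:R.
  by rewrite -(ltr_pM2r p2e) xe; apply: lt_le_trans tj' h2'.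
rewrite /rademacher.
have -> : 2 ^+ k * pi * t = (x - m%:R) * pi + pi *+ m.
  by rewrite /x -mulr_natr; ring.
rewrite (alternatingn (@sinDpi R)) sgrM -signr_odd sg_sign.
rewrite gtr0_sg ?mulr1 //.
apply: sin_gt0_pi; apply/andP; split.
  by apply: mulr_gt0; [rewrite subr_gt0 | exact: pi_gt0].
rewrite -[ltRHS]mul1r ltr_pM2r ?pi_gt0 //.
by move: xm1; rewrite -natr1; lra.
Qed.

Lemma in_bigsetU (T : Type) n (P : pred 'I_n) (F : 'I_n -> set T) j t :
  P j -> F j t -> (\big[setU/set0]_(i < n | P i) F i) t.
Proof. by move=> Pj Ft; rewrite (bigD1 j) //=; left. Qed.

Lemma bigsetU_in (T : Type) n (P : pred 'I_n) (F : 'I_n -> set T) t :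
  (\big[setU/set0]_(i < n | P i) F i) t -> exists2 j, P j & F j t.
Proof.
apply: (big_ind (fun A : set T => A t -> exists2 j, P j & F j t)) => //.
  by move=> A B HA HB [/HA|/HB].
by move=> i Pi Fi; exists i.
Qed.

Lemma measure_dyadic (R : realType) (N : nat) (Q : R -> Prop) (P : pred 'I_(2 ^ N))
  (HF : forall (j : 'I_(2 ^ N)) (t : R), (j%:R / 2 ^+ N < t < j.+1%:R / 2 ^+ N) ->
         (Q t <-> P j)) :
  lebesgue_measure [set t : R | 0 <= t <= 1 /\ Q t] =
  ((#|P|)%:R / 2 ^+ N)%:E.
Proof.
set c : R := 2 ^+ N.
have c0 : 0 < c by apply: exprn_gt0.
have cN : c = (2 ^ N)%:R by rewrite natrX.
pose I (j : 'I_(2 ^ N)) : set R := [set` `]j%:R / c, j.+1%:R / c[].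
have Ii : forall j t, I j t -> j%:R < t * c < j.+1%:R.
  move=> j t; rewrite /I /= in_itv /= => /andP[a b].
  by rewrite ltr_pdivrMr // in a; rewrite ltr_pdivlMr // in b; rewrite a b.
pose U := \big[setU/set0]_(j < 2 ^ N | P j) I j.
have mU : measurable U by apply: bigsetU_measurable => j _; apply: measurable_itv.
have muU : lebesgue_measure U = ((#|P|)%:R / c)%:E.
  rewrite measure_bigsetU_ord_cond //; last first.
    move=> i i' _ _ [t [/Ii /andP[a b] /Ii /andP[a' b']]].
    have h1 : (i%:R : R) < i'.+1%:R := lt_trans a b'.
    have h2 : (i'%:R : R) < i.+1%:R := lt_trans a' b.
    move: h1 h2; rewrite !ltr_nat !ltnS => h1 h2.
    by apply: val_inj; apply/eqP; rewrite eqn_leq h1 h2.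
    by move=> j _; apply: measurable_itv.
  rewrite (eq_bigr (fun _ => (c^-1)%:E)); last first.
    move=> j _; rewrite /I /= lebesgue_measure_itv /= lte_fin.
    rewrite ltr_pM2r ?invr_gt0 // ltr_nat ltnSn -EFinD; congr (_%:E).
    by rewrite -mulrBl -natrB // subSnn mul1r.
  by rewrite sumEFin sumr_const mulr_natl.
pose D := (fun j : nat => j%:R / c) @` `I_(2 ^ N).+1.
have fD : finite_set D by apply: finite_image; apply: finite_II.
pose E := [set t : R | 0 <= t <= 1 /\ Q t] `&` D.
have cE : countable E.
  by apply: finite_set_countable; apply: sub_finite_set fD; apply: subIsetr.
have mE : measurable E by apply: countable_measurable => // t; apply: measurable_set1.
have SUE : [set t : R | 0 <= t <= 1 /\ Q t] = U `|` E.
  apply/seteqP; split => t.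
  - move=> [/andP[t0 t1] Qt].
    have [Dt|nDt] := pselect (D t); first by right; split => //; split => //; rewrite t0 t1.
    left.
    have x0 : 0 <= t * c by apply: mulr_ge0 => //; apply: ltW.
    have /andP[jx xj] := truncn_itv x0.
    set j := Num.truncn (t * c) in jx xj.
    have jx' : j%:R < t * c.
      rewrite lt_neqAle jx andbT; apply/negP => /eqP ej; apply: nDt.
      exists j; last by rewrite ej mulrK // unitfE gt_eqF.
      rewrite /= ltnS -(ler_nat R) -cN ej.
      by rewrite -[leRHS]mul1r ler_pM2r.
    have jN : (j < 2 ^ N)%N.
      rewrite -(ltr_nat R) -cN; apply: (lt_le_trans jx').
      by rewrite -[leRHS]mul1r ler_pM2r.
    apply: (in_bigsetU (j := Ordinal jN)) => /=.
      apply/(HF (Ordinal jN) t) => //=.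
      by rewrite ltr_pdivrMr // ltr_pdivlMr // jx' xj.
    by rewrite /I /= in_itv /= ltr_pdivrMr // ltr_pdivlMr // jx' xj.
  - move=> [UT|[]//]; have [j Pj Ijt] := bigsetU_in UT.
    have := Ii _ _ Ijt => /andP[a b].
    split; last by apply/(HF j t) => //; move: Ijt; rewrite /I /= in_itv.
    apply/andP; split.
      by rewrite -(pmulr_lge0 _ c0); apply: le_trans (ltW a).
    rewrite -(ler_pM2r c0) mul1r; apply: ltW; apply: (lt_le_trans b).
    by rewrite cN ler_nat.
rewrite SUE; apply/eqP; rewrite eq_le; apply/andP; split.
  have H := measureU2 lebesgue_measure mU mE.
  apply: (le_trans H).
  change (lebesgue_measure U + lebesgue_measure E <= ((#|P|)%:R / c)%:E)%E.
  by rewrite (countable_lebesgue_measure0 cE) adde0 muU.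
by rewrite -muU; apply: le_measure => //; rewrite inE //; apply: measurableU.
Qed.

Lemma walsh_dyadic (R : realType) (N j nn : nat) (t : R) : (nn <= N)%N ->
  j%:R / 2 ^+ N < t < j.+1%:R / 2 ^+ N ->
  walsh nn t = (-1) ^+ ((\sum_(i < N | odd (nn %/ 2 ^ i)) odd (j %/ 2 ^ (N - i.+1)))%R : bool).
Proof.
move=> nN ht; rewrite /walsh.
rewrite (big_ord_widen_cond N (fun i => odd (nn %/ 2 ^ i)) (fun i => rademacher i.+1 t)) //.
rewrite (eq_bigl (fun i : 'I_N => odd (nn %/ 2 ^ i))); last first.
  move=> i /=; case o: (odd _); rewrite ?andbF ?andbT //=.
  rewrite ltnNge; apply/negP => ni.
  by move: o; rewrite divn_small //; apply: leq_ltn_trans ni (ltn_expl _ _).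
rewrite (eq_bigr (fun i : 'I_N => (-1) ^+ odd (j %/ 2 ^ (N - i.+1)))); last first.
  by move=> i _; apply: rad_dyadic => //; rewrite ltn_ord.
have mo : {morph (fun b : bool => (-1) ^+ b : R) : x y / (x + y)%R >-> x * y}.
  by move=> x y; exact: signr_addb.
have e0 : (fun b : bool => (-1) ^+ b : R) 0%R = 1 by rewrite /= expr0.
by rewrite (big_morph _ mo e0).
Qed.

Lemma bits_inj N (j j' : nat) : (j < 2 ^ N)%N -> (j' < 2 ^ N)%N ->
  (forall p, (p < N)%N -> odd (j %/ 2 ^ p) = odd (j' %/ 2 ^ p)) -> j = j'.
Proof.
elim: N j j' => [|N IH] j j'.
  by rewrite expn0 !ltnS !leqn0 => /eqP-> /eqP->.
rewrite expnS => hj hj' hb.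
have h2 : (j %/ 2 = j' %/ 2)%N.
  apply: IH; [by rewrite ltn_divLR // mulnC | by rewrite ltn_divLR // mulnC |].
  by move=> p pN; rewrite -!divnMA -expnS; apply: hb.
have ho : odd j = odd j' by have := hb 0%N isT; rewrite expn0 !divn1.
by rewrite -[j]odd_double_half -[j']odd_double_half -!divn2 h2 ho.
Qed.

Definition beta N (j : 'I_(2 ^ N)) : {ffun 'I_N -> bool} :=
  [ffun i : 'I_N => odd (j %/ 2 ^ (N - i.+1))].

Lemma beta_inj N : injective (@beta N).
Proof.
move=> j j' E; apply: val_inj; apply: bits_inj (ltn_ord j) (ltn_ord j') _ => p pN.
have iN : (N - p.+1 < N)%N by lia.
have := congr1 (fun F : {ffun 'I_N -> bool} => F (Ordinal iN)) E; rewrite !ffunE /=.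
by have -> : (N - (N - p.+1).+1 = p)%N by lia.
Qed.

Lemma card_beta N (Pr : pred {ffun 'I_N -> bool}) :
  #|[pred j : 'I_(2 ^ N) | Pr (beta j)]| = #|[pred f | Pr f]|.
Proof.
have bb : bijective (@beta N).
  apply: inj_card_bij; first exact: beta_inj.
  by rewrite card_ffun card_bool !card_ord.
rewrite -!sum1_card (reindex (@beta N)) /=; last exact: onW_bij.
by apply: eq_bigl => j; rewrite !inE.
Qed.

Lemma tl_bits nn : (0 < nn)%N -> odd (nn %/ 2 ^ trunc_log 2 nn) /\ (forall i, odd (nn %/ 2 ^ i) -> (i <= trunc_log 2 nn)%N).
Proof.
move=> n0; have l := trunc_logP (isT : (1 < 2)%N) n0.
have u := trunc_log_ltn nn (isT : (1 < 2)%N).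
split.
  have -> : (nn %/ 2 ^ trunc_log 2 nn = 1)%N; last by [].
  have a : (nn %/ 2 ^ trunc_log 2 nn < 2)%N by rewrite ltn_divLR ?expn_gt0 // -expnS.
  have b : (0 < nn %/ 2 ^ trunc_log 2 nn)%N by rewrite divn_gt0 ?expn_gt0.
  lia.
move=> i; rewrite leqNgt; apply: contraL => hi.
rewrite divn_small //; apply: leq_trans u _; exact: leq_pexp2l.
Qed.

Theorem lemma3p4 (R : realType) (q : R) (n : nat -> nat)
  (hq : 2 <= q) (hlac : lacunary q n) (M : nat) (hM : (1 <= M)%N)
  (a : nat -> R) (lam : R) (hlam : 0 < lam) :
  lebesgue_measure [set t : R | 0 <= t <= 1 /\
     lam < `| \sum_(1 <= k < M.+1) a k * rademacher k t |] =
  lebesgue_measure [set t : R | 0 <= t <= 1 /\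
     lam < `| \sum_(1 <= k < M.+1) a k * walsh (n k) t |].
Proof.
case: hlac => npos nrat.
have n2 : forall k, (1 <= k)%N -> (2 * n k <= n k.+1)%N.
  move=> k k1; have nk := npos k k1.
  have nkR : (0 : R) < (n k)%:R by rewrite ltr0n.
  have := nrat k k1; rewrite ler_pdivlMr // => h.
  rewrite -(ler_nat R) natrM; apply: le_trans h; rewrite ler_pM2r //.
set N := (M + \sum_(1 <= k < M.+1) n k)%N.
have hMN : (M <= N)%N by rewrite leq_addr.
have hnN : forall k : 'I_M, (n k.+1 <= N)%N.
  move=> k; rewrite /N (bigD1_seq k.+1) /=; try by rewrite addnCA leq_addr.
  all: try by rewrite /index_iota iota_uniq.
  by have := ltn_ord k; rewrite mem_index_iota; lia.
pose hh (k : nat) := trunc_log 2 (n k.+1).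
have hhS : forall k, (hh k < hh k.+1)%N.
  move=> k; rewrite /hh; apply: trunc_log_max => //.
  rewrite expnS; apply: leq_trans (n2 k.+1 isT).
  by rewrite leq_mul2l /=; exact: trunc_logP (isT : (1 < 2)%N) (npos k.+1 isT).
have hmono : {homo hh : x y / (x < y)%N >-> (x < y)%N} := homo_ltn ltn_trans hhS.
have hlt : forall k : 'I_M, (hh k < N)%N.
  move=> k; apply: leq_trans (ltn_expl _ (isT : (1 < 2)%N)) _.
  exact: leq_trans (trunc_logP (isT : (1 < 2)%N) (npos k.+1 isT)) (hnN k).
pose h (k : 'I_M) : 'I_N := Ordinal (hlt k).
have hinj : injective h.
  move=> x y /(congr1 val) /= e; apply: val_inj => /=.
  case: (ltngtP x y) => // xy.
    by have := hmono _ _ xy; rewrite e ltnn.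
  by have := hmono _ _ xy; rewrite e ltnn.
pose Pr (g : {ffun 'I_M -> bool}) : bool :=
  lam < `|\sum_(k < M) a k.+1 * (-1) ^+ (g k)|.
pose LR (f : {ffun 'I_N -> bool}) : {ffun 'I_M -> bool} :=
  [ffun k : 'I_M => f (widen_ord hMN k)].
pose LW (f : {ffun 'I_N -> bool}) : {ffun 'I_M -> bool} :=
  [ffun k : 'I_M => (\sum_(i < N | odd (n k.+1 %/ 2 ^ i)) f i)%R].
have mR := measure_dyadic (N := N)
   (Q := fun t : R => lam < `|\sum_(1 <= k < M.+1) a k * rademacher k t|)
   (P := [pred j | Pr (LR (beta j))]).
have mW := measure_dyadic (N := N)
   (Q := fun t : R => lam < `|\sum_(1 <= k < M.+1) a k * walsh (n k) t|)
   (P := [pred j | Pr (LW (beta j))]).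
rewrite mR; last first.
  move=> j t ht; rewrite inE /Pr.
  suff -> : (\sum_(1 <= k < M.+1) a k * rademacher k t) =
            \sum_(k < M) a k.+1 * (-1) ^+ (LR (beta j) k) by [].
  rewrite big_add1 /= big_mkord; apply: eq_bigr => k _; rewrite !ffunE /=.
  congr (_ * _); apply: rad_dyadic => //.
  by rewrite /= (leq_trans (ltn_ord k) hMN).
rewrite mW; last first.
  move=> j t ht; rewrite inE /Pr.
  suff -> : (\sum_(1 <= k < M.+1) a k * walsh (n k) t) =
            \sum_(k < M) a k.+1 * (-1) ^+ (LW (beta j) k) by [].
  rewrite big_add1 /= big_mkord; apply: eq_bigr => k _; rewrite !ffunE /=.
  congr (_ * _); rewrite (@walsh_dyadic R N j (n k.+1) t (hnN k) ht).
  congr ((-1) ^+ nat_of_bool _); apply: eq_bigr => i _; rewrite /beta ffunE //.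
suff -> : #|[pred j | Pr (LR (beta j))]| = #|[pred j | Pr (LW (beta j))]| by [].
have cR := card_beta (fun f => Pr (LR f)).
have cW := card_beta (fun f => Pr (LW f)).
rewrite /= in cR cW.
rewrite cR cW.
apply: count_eq.
- by move=> f f'; apply/ffunP => k; rewrite !ffunE.
- move=> g; exists [ffun i : 'I_N => odflt false (omap g (insub (val i)))].
  apply/ffunP => k; rewrite !ffunE /=.
  by rewrite (valK k).
- move=> f f'; apply/ffunP => k; rewrite !ffunE -big_split /=.
  by apply: eq_bigr => i _; rewrite ffunE.
- move=> g.
  pose Z := fun k (f : {ffun 'I_N -> bool}) =>
       (\sum_(i < N | (i < h k)%N && odd (n k.+1 %/ 2 ^ i)) f i)%R.
  have Zloc : forall k (f f' : {ffun 'I_N -> bool}),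
      (forall i : 'I_N, (i < h k)%N -> f i = f' i) -> Z k f = Z k f'.
    by move=> k f f' hff'; apply: eq_bigr => i /andP[hi _]; exact: hff'.
  have [f hf] := tri_surj hinj Zloc g.
  exists f; rewrite -hf; apply/ffunP => k; rewrite !ffunE.
  have [ob up] := tl_bits (npos k.+1 isT).
  rewrite (bigD1 (h k)) /=; last exact: ob.
  congr (_ + _); apply: eq_bigl => i.
  case oi: (odd _); rewrite ?andbF ?andbT //=.
  have hi := up i oi.
  by rewrite -val_eqE /= ltn_neqAle hi andbT.
Qed.
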